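(* Let $G$ be a locally compact group with Haar measure $\nu$, and let $U$ be an open symmetric relatively compact neighborhood of the identity. Let $C\subseteq G$ be a regular compact set with interior $C_0$, and suppose $C_0$ is $U$-connected. If $A\subseteq G$ satisfies $A\cap C_0\neq\emptyset$ and $C\setminus\overline A\neq\emptyset$, then $\nu(\overline A\cap C)<\nu(AU\cap C)$.
   Context: A compact set is regular if it equals the closure of its interior. $\overline A$ is the closure of $A$. A set $S\subseteq G$ is $U$-disconnected if there is $A\subseteq S$ with $A\neq\emptyset$, $A\neq S$ and $AU\cap S=A$; otherwise $S$ is $U$-connected. *)

(* Defs.v *)
From mathcomp Require Import all_boot all_order all_algebra.
From mathcomp Require Import all_classical all_reals all_analysis.
Set Implicit Arguments. Unset Strict Implicit. Unset Printing Implicit Defensive.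
Import Order.TTheory GRing.Theory Num.Theory.
Local Open Scope classical_set_scope.
Local Open Scope ring_scope.

Definition topological_group (G : ptopologicalType)
    (mul : G -> G -> G) (inv : G -> G) (e : G) : Prop :=
  [/\ (forall x y z, mul x (mul y z) = mul (mul x y) z),
      (forall x, mul e x = x /\ mul x e = x),
      (forall x, mul (inv x) x = e /\ mul x (inv x) = e),
      continuous (fun p : G * G => mul p.1 p.2) &
      continuous inv].

Definition setmul (G : Type) (mul : G -> G -> G) (A B : set G) : set G :=
  [set z | exists a b, A a /\ B b /\ z = mul a b].

Notation borelG G := (g_sigma_algebraType (@open G)).

Definition haar_measure (R : realType) (G : ptopologicalType)
    (mul : G -> G -> G) (nu : {measure set (borelG G) -> \bar R}) : Prop :=
  [/\ (forall x (A : set (borelG G)), measurable A ->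
         nu [set mul x a | a in A] = nu A),
      (forall K : set G, compact K -> (nu K < +oo)%E),
      (forall A : set (borelG G), measurable A ->
         nu A = ereal_inf [set nu O | O in [set O : set G | open O /\ A `<=` O]]),
      (forall O : set G, open O ->
         nu O = ereal_sup [set nu K | K in [set K : set G | compact K /\ K `<=` O]]) &
      nu [set: borelG G] != 0%E].

Definition regular_compact (G : ptopologicalType) (C : set G) : Prop :=
  compact C /\ C = closure (interior C).

Definition U_disconnected (G : Type) (mul : G -> G -> G) (U S : set G) : Prop :=
  exists A : set G, [/\ A `<=` S, A != set0, A != S & setmul mul A U `&` S = A].

Definition U_connected (G : Type) (mul : G -> G -> G) (U S : set G) : Prop :=
  ~ U_disconnected mul U S.

(* Main.v *)
Require Import Defs.
From mathcomp Require Import all_boot all_order all_algebra.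
From mathcomp Require Import all_classical all_reals all_analysis.
Import Order.TTheory GRing.Theory Num.Theory.
Local Open Scope classical_set_scope.
Local Open Scope ring_scope.

Section Top.
Variables (G : ptopologicalType) (mul : G -> G -> G) (inv : G -> G) (e : G).
Hypothesis HG : topological_group mul inv e.

Lemma pair_contl (y : G) : continuous (fun z : G => (y, z)).
Proof. move=> z; apply: cvg_pair; [exact: cvg_cst | exact: cvg_id]. Qed.
Lemma pair_contr (y : G) : continuous (fun z : G => (z, y)).
Proof. move=> z; apply: cvg_pair; [exact: cvg_id | exact: cvg_cst]. Qed.

Lemma mull_cont (y : G) : continuous (mul y).
Proof.
case: HG => _ _ _ Hm _ z.
apply: (continuous_comp (f := fun z => (y, z)) (g := fun p : G * G => mul p.1 p.2)).
  exact: pair_contl.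
exact: Hm.
Qed.

Lemma mulinvr_cont (c : G) : continuous (fun z => mul (inv z) c).
Proof.
case: HG => _ _ _ Hm Hi z.
apply: (continuous_comp (f := inv) (g := fun w => mul w c)); first exact: Hi.
apply: (continuous_comp (f := fun w => (w, c)) (g := fun p : G * G => mul p.1 p.2)).
  exact: pair_contr.
exact: Hm.
Qed.
End Top.

Section Top2.
Variables (G : ptopologicalType) (mul : G -> G -> G) (inv : G -> G) (e : G).
Hypothesis HG : topological_group mul inv e.

Lemma cancel1 a u : mul (inv a) (mul a u) = u.
Proof. case: HG => As Id Iv _ _. by rewrite As (Iv a).1 (Id u).1. Qed.
Lemma cancel2 a c : mul a (mul (inv a) c) = c.
Proof. case: HG => As Id Iv _ _. by rewrite As (Iv a).2 (Id c).1. Qed.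

Lemma open_img (y : G) (W : set G) : open W -> open [set mul y a | a in W].
Proof.
move=> oW.
have -> : [set mul y a | a in W] = (mul (inv y)) @^-1` W.
  apply/seteqP; split => z /=.
    by case=> a Wa <-; rewrite cancel1.
  by move=> Wz; exists (mul (inv y) z) => //; rewrite cancel2.
exact: (proj1 (continuousP (mul (inv y))) (@mull_cont _ _ _ _ HG _) _ oW).
Qed.

Lemma open_setmul (A U : set G) : open U -> open (setmul mul A U).
Proof.
move=> oU.
have -> : setmul mul A U = \bigcup_(a in A) [set mul a u | u in U].
  apply/seteqP; split => z /=.
    by case=> a [u [Aa [Uu ->]]]; exists a => //; exists u.
  by case=> a Aa [u Uu <-]; exists a, u.
by apply: bigcup_open => a _; apply: open_img.
Qed.

Lemma closure_key (A U : set G) x c : open U -> closure A x ->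
  U (mul (inv x) c) -> setmul mul A U c.
Proof.
move=> oU Ax Uxc.
have nB : nbhs x ((fun z => mul (inv z) c) @^-1` U).
  apply: open_nbhs_nbhs; split => //.
  exact: (proj1 (continuousP (fun z => mul (inv z) c)) (@mulinvr_cont _ _ _ _ HG _) _ oU).
have [a [Aa /= Ua]] := Ax _ nB.
by exists a, (mul (inv a) c); split => //; split => //; rewrite cancel2.
Qed.

End Top2.

Lemma measO (G : ptopologicalType) (O : set G) : open O -> measurable (O : set (borelG G)).
Proof. by move=> oO; apply: sub_sigma_algebra. Qed.

Lemma measCl (G : ptopologicalType) (O : set G) : closed O -> measurable (O : set (borelG G)).
Proof.
move=> cO; rewrite -(setCK O); apply: measurableC; apply: measO.
exact: closed_openC.
Qed.

Section Meas.
Variables (R : realType) (G : ptopologicalType) (mul : G -> G -> G) (inv : G -> G) (e : G).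
Hypothesis HG : topological_group mul inv e.
Variable nu : {measure set (borelG G) -> \bar R}.
Hypothesis Hnu : haar_measure mul nu.
Hypothesis Hhaus : hausdorff_space G.

Lemma null_list (W : set G) : open W -> nu W = 0%E ->
  forall s : seq G, measurable ([set z | exists2 y, y \in s & [set mul y a | a in W] z] : set (borelG G))
   /\ nu [set z | exists2 y, y \in s & [set mul y a | a in W] z] = 0%E.
Proof.
case: Hnu => Hinv _ _ _ _ oW nW; elim=> [|y s [IHm IHn]].
  have -> : [set z | exists2 y0, y0 \in [::] & [set mul y0 a | a in W] z] = set0.
    by apply/seteqP; split => z //= [].
  by split; [exact: measurable0 | exact: measure0].
have -> : [set z | exists2 y0, y0 \in y :: s & [set mul y0 a | a in W] z] =
   [set mul y a | a in W] `|` [set z | exists2 y0, y0 \in s & [set mul y0 a | a in W] z].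
  apply/seteqP; split => z /=.
    case=> y0; rewrite inE => /orP [/eqP -> ?|ys H]; [by left|by right; exists y0].
  by case=> [H|[y0 ys H]]; [exists y; rewrite ?inE ?eqxx|exists y0; rewrite ?inE ?ys ?orbT].
have mT : measurable ([set mul y a | a in W] : set (borelG G)).
  by apply: measO; exact: (@open_img _ _ _ _ HG).
split; first exact: measurableU.
apply/eqP; rewrite eq_le measure_ge0 andbT.
apply: (le_trans (measureU2 _ mT IHm)).
have H00 : forall X Y : \bar R, X = 0%E -> Y = 0%E -> (X + Y <= 0)%E.
  by move=> X Y -> ->; rewrite adde0.
apply: H00; [exact: (etrans (Hinv y W (@measO _ _ oW)) nW) | exact: IHn].
Qed.

Lemma haar_pos (W : set G) w : open W -> W w -> (0 < nu W)%E.
Proof.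
move=> oW Ww; rewrite lt0e measure_ge0 andbT; apply/negP => /eqP nW.
case: Hnu => Hinv Hfin Hout Hin Hne.
have HK : forall K : set G, compact K -> nu K = 0%E.
  move=> K cK.
  have : finite_subset_cover K (fun x => K `&` [set mul (mul x (inv w)) a | a in W]) K.
    move: cK; rewrite compact_cover cover_compactE => /(_ G K (fun x => K `&` [set mul (mul x (inv w)) a | a in W])).
    apply.
      by exists (fun x => [set mul (mul x (inv w)) a | a in W]) => // x _; exact: (@open_img _ _ _ _ HG).
    move=> x Kx; exists x => //; split => //; exists w => //.
    by case: HG => As Id Iv _ _; rewrite -As (Iv w).1 (Id x).2.
  case=> D _ KD.
  have [mS nS] := null_list W oW nW [seq mul x (inv w) | x <- finmap.enum_fset D].
  apply/eqP; rewrite eq_le measure_ge0 andbT -nS.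
  apply: le_measure; rewrite ?inE //.
    by apply: measCl; exact: compact_closed.
  move=> z Kz; have [x Dx [_ Tz]] := KD z Kz.
  exists (mul x (inv w)) => //.
  by apply/mapP; exists x.
have := Hin [set: G] openT.
have -> : ereal_sup [set nu K | K in [set K : set G | compact K /\ K `<=` [set: G]]] = 0%E.
  apply/eqP; rewrite eq_le; apply/andP; split.
    by apply/ereal_supP => y [K [cK _] <-]; rewrite HK.
  apply: ereal_sup_ubound; exists set0; last exact: measure0.
  by split; [exact: compact0|].
by move=> H; move: Hne; rewrite H eqxx.
Qed.
End Meas.

Theorem lemma8 (R : realType) (G : ptopologicalType)
    (mul : G -> G -> G) (inv : G -> G) (e : G)
    (HG : topological_group mul inv e)
    (Hlc : locally_compact [set: G]) (Hhaus : hausdorff_space G)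
    (nu : {measure set (borelG G) -> \bar R}) (Hnu : haar_measure mul nu)
    (U : set G) (HUo : open U) (HUe : U e)
    (HUsym : [set inv u | u in U] = U) (HUrc : compact (closure U))
    (C : set G) (HC : regular_compact C)
    (HC0 : U_connected mul U (interior C))
    (A : set G) (HA1 : A `&` interior C != set0)
    (HA2 : C `\` closure A != set0) :
  (nu (closure A `&` C) < nu (setmul mul A U `&` C))%E.
Proof.
have [As Id Iv _ _] := HG.
have [Hinv Hfin _ _ _] := Hnu.
case: HC => cC eC.
set C0 := interior C.
set AU := setmul mul A U.
have oAU : open AU by exact: (@open_setmul _ _ _ _ HG).
have HclU : forall x u, closure A x -> U u -> AU (mul x u).
  by move=> x u Ax Uu; apply: (@closure_key _ _ _ _ HG _ _ x) => //; rewrite (@cancel1 _ _ _ _ HG).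
have Hcl : closure A `<=` AU.
  by move=> x Ax; rewrite -[x](Id x).2; apply: HclU.
have oW : open (AU `&` C0 `&` ~` closure A).
  apply: openI; first (apply: openI => //; exact: open_interior).
  exact: closed_openC (@closed_closure _ A).
have [w Ww] : (AU `&` C0 `&` ~` closure A) !=set0.
  apply/set0P/negP => /eqP W0.
  set D := closure A `&` C0.
  have DC0 : D = C0.
    apply: contrapT => DC0; apply: HC0; exists D; split.
    - by move=> z [].
    - apply/set0P; move/set0P: HA1 => [z [Az C0z]]; exists z; split => //.
      exact: subset_closure.
    - by apply/eqP.
    apply/seteqP; split.
      move=> z [[d [u [[Ad C0d] [Uu ->]]]] C0z]; split => //.
      apply: contrapT => ncl.
      have : (AU `&` C0 `&` ~` closure A) (mul d u) by split; [split; [exact: HclU|]|].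
      by rewrite W0.
    move=> z [Az C0z]; split => //; exists z, e; split; [by split|split=> //].
    by rewrite (Id z).2.
  move/set0P: HA2 => [z [Cz nAz]]; apply: nAz.
  have : closure C0 z by rewrite -eC.
  rewrite -DC0 => /(closureS (A := D) (B := closure A) (fun x (h : D x) => h.1)).
  by rewrite -(proj1 (closure_id _) (@closed_closure _ A)).
have mC : measurable (C : set (borelG G)) by apply: measCl; exact: compact_closed.
have mcl : measurable (closure A : set (borelG G)) by apply: measCl; exact: closed_closure.
have mX : measurable (closure A `&` C : set (borelG G)) by exact: measurableI.
have mY : measurable ((AU `&` C) `\` closure A : set (borelG G)).
  by apply: measurableD => //; apply: measurableI => //; exact: measO.
have -> : AU `&` C = (closure A `&` C) `|` ((AU `&` C) `\` closure A).
  apply/seteqP; split => z.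
    by move=> [AUz Cz]; case: (pselect (closure A z)) => h; [left|right].
  by case=> [[h Cz]|[h _]] //; split => //; exact: Hcl.
rewrite measureU //; last first.
  by apply/seteqP; split => z // [[h _] [_ h']].
rewrite lteDl; last first.
  rewrite ge0_fin_numE ?measure_ge0 //.
  apply: (le_lt_trans _ (Hfin _ cC)).
  by apply: le_measure; rewrite ?inE // => z [].
apply: (lt_le_trans (@haar_pos _ _ _ _ _ HG nu Hnu Hhaus _ w oW Ww)).
apply: le_measure; rewrite ?inE //; first by apply: measO.
move=> z [[AUz C0z] nz]; split => //; split => //.
exact: interior_subset.
Qed.
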